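(* Let $G$ be a finite group with $|G|\ge3$. Then $\mathsf D(G)\le\omega(G)$, and equality holds if $G$ is abelian.
   Context: For a finite group $G$ (multiplicative, identity $1_G$), $\mathcal F(G)$ is the free abelian monoid with basis $G$ (sequences $S=g_1\boldsymbol{\cdot}\ldots\boldsymbol{\cdot}g_\ell$, operation $\boldsymbol{\cdot}$, length $|S|=\ell$). $\pi(S)=\{g_{\tau(1)}\cdots g_{\tau(\ell)}:\tau\text{ a permutation of }[1,\ell]\}$, $\mathcal B(G)=\{S\in\mathcal F(G):1_G\in\pi(S)\}$, $\mathcal A(G)$ its set of atoms, and $\mathsf D(G)=\max\{|U|:U\in\mathcal A(G)\}$. For an atomic monoid $H$ and $b\in H$, $\omega(H,b)$ is the smallest $N\in\mathbb N_0\cup\{\infty\}$ such that for all $n\in\mathbb N$ and $a_1,\dots,a_n\in H$ with $b\mid a_1\cdots a_n$ (in $H$), there is $\Omega\subset[1,n]$ with $|\Omega|\le N$ and $b\mid\prod_{\nu\in\Omega}a_\nu$ (in $H$). $\omega(H)=\sup\{\omega(H,u):u\in\mathcal A(H)\}$, and $\omega(G)=\omega(\mathcal B(G))$. *)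

(* Defs.v *)
From HB Require Import structures.
From mathcomp Require Import all_boot all_order all_fingroup.
From Stdlib Require Import ClassicalEpsilon.
Set Implicit Arguments. Unset Strict Implicit. Unset Printing Implicit Defensive.

(* Extended naturals N_0 \cup {oo}: [None] is infinity. *)
Definition enat := option nat.

Definition ele (x y : enat) : Prop :=
  match y with
  | None => True
  | Some m => match x with None => False | Some n => (n <= m)%N end
  end.

Definition is_esup (P : enat -> Prop) (s : enat) : Prop :=
  (forall x, P x -> ele x s) /\ (forall y, (forall x, P x -> ele x y) -> ele s y).
Definition esup (P : enat -> Prop) : enat := epsilon (inhabits None) (is_esup P).

Definition is_emin (P : enat -> Prop) (s : enat) : Prop :=
  P s /\ (forall y, P y -> ele s y).
Definition emin (P : enat -> Prop) : enat := epsilon (inhabits None) (is_emin P).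

Section BG.
Variable gT : finGroupType.
Local Open Scope group_scope.

(* Sequences over G: elements of F(G) are represented by [seq gT], taken up
   to permutation ([perm_eq]); the monoid operation is concatenation. *)

Definition seq_pi (S : seq gT) : {set gT} :=
  [set:: [seq (\prod_(x <- s) x) | s <- permutations S]].

Definition zs (S : seq gT) : Prop := 1 \in seq_pi S.

Definition bdvd (a b : seq gT) : Prop :=
  exists c, zs c /\ perm_eq b (a ++ c).

Definition bunit (a : seq gT) : Prop :=
  zs a /\ exists c, zs c /\ perm_eq (a ++ c) [::].

Definition batom (u : seq gT) : Prop :=
  zs u /\ ~ bunit u /\
  forall a c, zs a -> zs c -> perm_eq u (a ++ c) -> bunit a \/ bunit c.

Definition Davenport : enat :=
  esup (fun x => exists U, batom U /\ x = Some (size U)).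

Definition omega_prop (b : seq gT) (N : nat) : Prop :=
  forall (as_ : seq (seq gT)), (0 < size as_)%N -> (forall a, a \in as_ -> zs a) ->
    bdvd b (flatten as_) ->
    exists m : bitseq, size m = size as_ /\ (count id m <= N)%N /\
      bdvd b (flatten (mask m as_)).

Definition omega_elt (b : seq gT) : enat :=
  emin (fun x => match x with None => True | Some N => omega_prop b N end).

Definition omega_G : enat :=
  esup (fun x => exists u, batom u /\ x = omega_elt u).

End BG.

(* Main.v *)
Require Import Defs.
From HB Require Import structures.
From mathcomp Require Import all_boot all_order all_fingroup zify.
From Stdlib Require Import Classical ClassicalEpsilon.
Set Implicit Arguments. Unset Strict Implicit. Unset Printing Implicit Defensive.

Section Aux.
Variable gT : finGroupType.
Local Open Scope group_scope.
Implicit Types (S s t c : seq gT).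

Lemma zsP S : zs S <-> exists2 s, perm_eq s S & \prod_(x <- s) x = 1.
Proof.
rewrite /zs /seq_pi inE; split.
  by case/mapP=> s; rewrite mem_permutations => Hs E; exists s.
by case=> s Hs Hp; apply/mapP; exists s; rewrite ?mem_permutations.
Qed.

Lemma zs_perm S T : perm_eq S T -> zs S -> zs T.
Proof.
move=> HST /zsP [s Hs Hp]; apply/zsP; exists s => //; exact: perm_trans HST.
Qed.

Lemma zs_nil : zs ([::] : seq gT).
Proof. by apply/zsP; exists [::]; rewrite ?big_nil. Qed.

Lemma zs_cat S T : zs S -> zs T -> zs (S ++ T).
Proof.
move=> /zsP [s Hs Hp] /zsP [t Ht Hq]; apply/zsP; exists (s ++ t).
  by rewrite perm_cat.
by rewrite big_cat /= Hp Hq mulg1.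
Qed.

Lemma zs_flatten (L : seq (seq gT)) : (forall a, a \in L -> zs a) -> zs (flatten L).
Proof.
elim: L => [|a L IH] H /=; first exact: zs_nil.
apply: zs_cat; first by apply: H; rewrite inE eqxx.
by apply: IH => b Hb; apply: H; rewrite inE Hb orbT.
Qed.

Lemma prod_rev_inv s : \prod_(x <- rev (map (@invg gT) s)) x = (\prod_(x <- s) x)^-1.
Proof.
elim: s => [|x s IH]; first by rewrite !big_nil invg1.
rewrite /= rev_cons -cats1 big_cat /= IH big_seq1.
by rewrite [in RHS]big_cons invMg.
Qed.

Lemma zs_inv S : zs S -> zs (map (@invg gT) S).
Proof.
move=> /zsP [s Hs Hp]; apply/zsP; exists (rev (map (@invg gT) s)).
  by rewrite perm_rev perm_map.
by rewrite prod_rev_inv Hp invg1.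
Qed.

Lemma zs_pair (g : gT) : zs [:: g; g^-1].
Proof. by apply/zsP; exists [:: g; g^-1]; rewrite // big_cons big_seq1 mulgV. Qed.

Lemma zs_single (g : gT) : zs [:: g] -> g = 1.
Proof.
move=> /zsP [s Hs]; have := perm_size Hs; case: s Hs => [|x [|y s]] //= Hs _.
rewrite big_seq1 => Hx; subst x.
by have := perm_mem Hs 1; rewrite !inE eqxx => /esym /eqP.
Qed.

Lemma bunitE (a : seq gT) : bunit a -> a = [::].
Proof.
by case=> _ [c [_ /perm_size]]; rewrite size_cat; case: a.
Qed.

Lemma bunit_nil : bunit ([::] : seq gT).
Proof. by split; [exact: zs_nil | exists [::]; split; [exact: zs_nil|]]. Qed.

Lemma batom_nil : ~ batom ([::] : seq gT).
Proof. by case=> _ [H _]; apply: H; exact: bunit_nil. Qed.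


Lemma perm_pairs s :
  perm_eq (flatten (map (fun g => [:: g; g^-1]) s)) (s ++ map (@invg gT) s).
Proof.
elim: s => //= x s IH; apply/seq.permP => p.
move/seq.permP: IH => /(_ p); rewrite /= !count_cat /= => ->; lia.
Qed.

Lemma perm_mask_split (m : bitseq) s : size m = size s ->
  perm_eq s (mask m s ++ mask (map negb m) s).
Proof.
elim: s m => [|x s IH] [|b m] //= [] /IH /seq.permP H; apply/seq.permP => p.
case: b => /=; rewrite ?count_cat /= H count_cat. by []. by rewrite addnCA.
Qed.

Lemma count_negb (m : bitseq) : count id (map negb m) + count id m = size m.
Proof. by elim: m => //= b m IH; case: b => /=; lia. Qed.

Lemma omega_lower (U : seq gT) N : batom U -> 3 <= size U -> omega_prop U N -> size U <= N.
Proof.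
move=> HU H3 Hom.
pose f := fun g : gT => [:: g; g^-1].
have h1 : 0 < size (map f U) by rewrite size_map (leq_trans _ H3).
have h2 : forall a, a \in map f U -> zs a by move=> a /mapP [g _ ->]; exact: zs_pair.
have h3 : bdvd U (flatten (map f U)).
  exists (map (@invg gT) U); split; [apply: zs_inv; by case: HU | exact: perm_pairs].
have [m [Hm [Hc [c [Hcz Hp]]]]] := Hom _ h1 h2 h3.
rewrite size_map in Hm; rewrite -map_mask in Hp.
set A := mask m U in Hp; set B := mask (map negb m) U.
have HUAB : perm_eq U (A ++ B) by exact: perm_mask_split.
case EB: B => [|b B'].
  have := size_mask (m := map negb m) (s := U); rewrite size_map => /(_ Hm).
  rewrite -/B EB /= => E; have := count_negb m; rewrite -E Hm; lia.
have H1 : perm_eq (A ++ map (@invg gT) A) (A ++ (B ++ c)).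
  have P1 : perm_eq (A ++ map (@invg gT) A) (flatten (map f A)).
    by rewrite perm_sym perm_pairs.
  apply: perm_trans P1 _; apply: perm_trans Hp _.
  by rewrite catA perm_cat2r.
rewrite perm_cat2l in H1.
have H2 : perm_eq (map (@invg gT) U) ((B ++ c) ++ map (@invg gT) B).
  apply: perm_trans (perm_cat H1 (perm_refl _)).
  by rewrite -map_cat perm_map.
have H3' : perm_eq (map (@invg gT) U)
   ([:: b; b^-1] ++ ((B' ++ map (@invg gT) B') ++ c)).
  apply: perm_trans H2 _; rewrite EB; apply/seq.permP => p.
  by rewrite /= !count_cat /=; lia.
have H4 := perm_map (@invg gT) H3'; rewrite (mapK invgK) map_cat in H4.
case: HU => _ [_ Hat].
have HR : zs (map (@invg gT) ((B' ++ map (@invg gT) B') ++ c)).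
  apply: zs_inv; apply: zs_cat Hcz; apply: zs_perm (perm_pairs B') _.
  by apply: zs_flatten => a /mapP [g _ ->]; exact: zs_pair.
have [/bunitE //|/bunitE E] := Hat _ _ (zs_inv (zs_pair b)) HR H4.
by move: (perm_size H4); rewrite E /= ?size_map; lia.
Qed.


Lemma triple_atom (x y z : gT) : x != 1 -> y != 1 -> z != 1 ->
  zs [:: x; y; z] -> batom [:: x; y; z].
Proof.
move=> hx hy hz H; split => //; split; first by move/bunitE.
move=> a c Ha Hc Hp.
have Hs := perm_size Hp; rewrite size_cat /= in Hs.
have Hin : forall w, w \in a ++ c -> w != 1.
  by move=> w; rewrite -(perm_mem Hp) !inE => /or3P [] /eqP ->.
case: a Ha Hp Hs Hin => [|w [|w2 a]] Ha Hp Hs Hin; first by left; exact: bunit_nil.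
  by have := Hin w; rewrite (zs_single Ha) inE eqxx => /(_ isT) /eqP.
case: c Hc Hp Hs Hin => [|v [|v2 c]] Hc Hp Hs Hin; first by right; exact: bunit_nil.
  have := Hin v; rewrite (zs_single Hc) mem_cat mem_seq1 eqxx orbT => /(_ isT).
  by move/eqP.
by move: Hs => /=; lia.
Qed.

Lemma exists_triple : 3 <= #|gT| -> exists U : seq gT, batom U /\ size U = 3.
Proof.
move=> hG.
have : 0 < #|~: [set (1 : gT)]|.
  by have := cardsC [set (1 : gT)]; rewrite cards1 => E; move: hG; rewrite -E; lia.
case/card_gt0P => x; rewrite !inE => hx.
have : 0 < #|~: [set (1 : gT); x^-1]|.
  have := cardsC [set (1 : gT); x^-1]; rewrite cards2.
  by move=> E; move: hG; rewrite -E; case: (_ != _) => /=; lia.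
case/card_gt0P => y; rewrite !inE negb_or => /andP [hy hyx].
have hxy : x * y != 1.
  apply: contra hyx => /eqP E; apply/eqP.
  by rewrite -(mulKg x y) E mulg1.
exists [:: x; y; (x * y)^-1]; split => //.
apply: triple_atom => //; first by rewrite eq_invg1.
apply/zsP; exists [:: x; y; (x * y)^-1] => //.
by rewrite !big_cons big_nil mulg1 mulgA mulgV.
Qed.


Definition msub (S a : seq gT) := foldl (fun s y => rem y s) S a.

Lemma count_rem x y (s : seq gT) : count_mem x (rem y s) = count_mem x s - (y == x).
Proof.
case: (boolP (y \in s)) => Hy.
  have /seq.permP /(_ (pred1 x)) := perm_to_rem Hy.
  by rewrite /= => ->; rewrite addKn.
rewrite rem_id //; case: eqP => [E|_]; last by rewrite subn0.
by subst y; move/count_memPn: Hy => ->.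
Qed.

Lemma count_msub x (a S : seq gT) :
  count_mem x (msub S a) = count_mem x S - count_mem x a.
Proof.
elim: a S => [|y a IH] S /=; first by rewrite subn0.
by rewrite IH count_rem subnDA.
Qed.

Lemma size_msub (S a : seq gT) :
  size (msub S a) <= size S /\ (size (msub S a) = size S -> msub S a = S).
Proof.
elim: a S => [|y a IH] S //.
change (size (msub (rem y S) a) <= size S /\
  (size (msub (rem y S) a) = size S -> msub (rem y S) a = S)).
case: (boolP (y \in S)) => Hy; last by rewrite rem_id //; exact: IH.
have HS : 0 < size S by move: Hy; clear; case: S.
have [H1 _] := IH (rem y S); have := size_rem Hy.
move=> E; rewrite E -subn1 in H1; split.
  by apply: leq_trans H1 _; exact: leq_subr.
move=> E2; exfalso; move: H1; rewrite E2 => H1.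
by move: H1 HS; case: (size S) => //= n; rewrite subSS subn0 ltnn.
Qed.

Lemma incl_perm (S T : seq gT) :
  (forall x, count_mem x S <= count_mem x T) -> exists c, perm_eq T (S ++ c).
Proof.
move=> H; exists (msub T S); rewrite /perm_eq; apply/allP => x _ /=; apply/eqP.
by rewrite count_cat count_msub subnKC //; exact: H.
Qed.

Lemma select (L : seq (seq gT)) (S : seq gT) :
  (forall x, count_mem x S <= count_mem x (flatten L)) ->
  exists m : bitseq, [/\ size m = size L, count id m <= size S &
    forall x, count_mem x S <= count_mem x (flatten (mask m L))].
Proof.
elim: L S => [|a L IH] S H.
  by exists [::]; split.
pose S' := msub S a.
have H' : forall x, count_mem x S' <= count_mem x (flatten L).
  by move=> x; rewrite count_msub; have := H x; rewrite /= count_cat; lia.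
have [m [Hm Hc Hi]] := IH S' H'.
have [Hle Heq] := size_msub S a.
case: (ltnP (size S') (size S)) => Hlt.
  exists (true :: m); split => /=; [by rewrite Hm | by lia |].
  by move=> x; rewrite count_cat; have := Hi x; rewrite /S' count_msub; have := H x; rewrite /= count_cat; lia.
have ES : S' = S by apply: Heq; apply/eqP; rewrite eqn_leq Hle Hlt.
exists (false :: m); split => /=; [by rewrite Hm | by rewrite -ES |].
by rewrite -ES.
Qed.

Lemma prod_rem (Hc : forall x y : gT, commute x y) x (t : seq gT) :
  x \in t -> \prod_(z <- t) z = x * \prod_(z <- rem x t) z.
Proof.
elim: t => //= y t IH; rewrite inE; case: (eqVneq y x) => [-> _|ne] /=.
  by rewrite big_cons.
move=> Hx.
rewrite !big_cons IH //.
by rewrite !mulgA (Hc x y).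
Qed.

Lemma prod_perm (Hc : forall x y : gT, commute x y) (s t : seq gT) :
  perm_eq s t -> \prod_(z <- s) z = \prod_(z <- t) z.
Proof.
elim: s t => [|x s IH] t H.
  by case: t H => // y t /perm_size.
have Hx : x \in t by rewrite -(perm_mem H) mem_head.
rewrite (prod_rem Hc Hx) big_cons; congr (_ * _); apply: IH.
by rewrite -(perm_cons x); apply: perm_trans H (perm_to_rem Hx).
Qed.

Lemma omega_upper (U : seq gT) : abelian [set: gT] -> zs U -> omega_prop U (size U).
Proof.
move=> Hab HU.
have Hc : forall x y : gT, commute x y.
  by move/centsP: Hab => H x y; apply: (H x); rewrite inE.
have zsE : forall S : seq gT, zs S -> \prod_(z <- S) z = 1.
  move=> S /zsP [s Hs E]; apply: etrans E; apply: (prod_perm Hc); by rewrite perm_sym.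
move=> L _ HL [c [Hcz Hp]].
have Hinc : forall x, count_mem x U <= count_mem x (flatten L).
  by move=> x; move/seq.permP: Hp => /(_ (pred1 x)) ->; rewrite count_cat leq_addr.
have [m [Hm Hcm Hi]] := select Hinc.
exists m; split => //; split => //.
have [c' Hp'] := incl_perm Hi.
exists c'; split => //; apply/zsP; exists c' => //.
have HF : zs (flatten (mask m L)).
  by apply: zs_flatten => a /mem_mask; exact: HL.
have := zsE _ HF; rewrite (prod_perm Hc Hp') big_cat /= (zsE _ HU) mul1g.
by [].
Qed.

End Aux.

Definition dec (P : Prop) : bool := if excluded_middle_informative P then true else false.
Lemma decP (P : Prop) : dec P <-> P.
Proof. by rewrite /dec; case: excluded_middle_informative. Qed.

Lemma esupP (P : enat -> Prop) : is_esup P (esup P).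
Proof.
rewrite /esup; apply: epsilon_spec.
case: (classic (exists N, forall x, P x -> ele x (Some N))) => [Hb|Hnb].
  have Hb' : exists N, dec (forall x, P x -> ele x (Some N)).
    by case: Hb => N HN; exists N; apply/decP.
  case: (ex_minnP Hb') => N0 /decP H0 Hmin.
  exists (Some N0); split => // [[M|]] // HM.
  by apply: Hmin; apply/decP.
exists None; split => // [[M|]] // HM.
by exfalso; apply: Hnb; exists M.
Qed.

Lemma eminP (P : enat -> Prop) : P None -> is_emin P (emin P).
Proof.
move=> PN; rewrite /emin; apply: epsilon_spec.
case: (classic (exists N, P (Some N))) => [Hb|Hnb].
  have Hb' : exists N, dec (P (Some N)).
    by case: Hb => N HN; exists N; apply/decP.
  case: (ex_minnP Hb') => N0 /decP H0 Hmin.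
  exists (Some N0); split => // [[M|]] // HM.
  by apply: Hmin; apply/decP.
exists None; split => // [[M|]] // HM.
by exfalso; apply: Hnb; exists M.
Qed.

Lemma ele_trans x y z : ele x y -> ele y z -> ele x z.
Proof. by case: z => [n|] //; case: y => [m|] //; case: x => [k|] // /= h1 h2; apply: leq_trans h1 h2. Qed.

Lemma ele_anti x y : ele x y -> ele y x -> x = y.
Proof.
case: x => [n|]; case: y => [m|] //= h1 h2.
by congr Some; apply/eqP; rewrite eqn_leq h1 h2.
Qed.

Section Main.
Variable gT : finGroupType.

Lemma omega_elt_spec (U : seq gT) :
  (match omega_elt U with None => True | Some N => omega_prop U N end) /\
  (forall y, (match y with None => True | Some N => omega_prop U N end) ->
     ele (omega_elt U) y).
Proof. by have := @eminP (fun x => match x with None => True | Some N => omega_prop U N end) I. Qed.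

Lemma lower_elt (U : seq gT) : batom U -> 3 <= size U -> ele (Some (size U)) (omega_elt U).
Proof.
move=> HU H3; have [H1 _] := omega_elt_spec U.
case: (omega_elt U) H1 => [N|] // HN /=.
exact: omega_lower HU H3 HN.
Qed.

Lemma upper_elt (U : seq gT) : abelian [set: gT] -> batom U -> ele (omega_elt U) (Some (size U)).
Proof.
move=> Hab HU; have [_ H2] := omega_elt_spec U.
by apply: H2; apply: omega_upper => //; case: HU.
Qed.

End Main.

Theorem lemma5p8 (gT : finGroupType) (hG : (3 <= #|gT|)%N) :
  ele (Davenport gT) (omega_G gT) /\
  (abelian [set: gT] -> Davenport gT = omega_G gT).
Proof.
have [D1 D2] : is_esup _ (Davenport gT) := esupP _.
have [W1 W2] : is_esup _ (omega_G gT) := esupP _.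
have [W [HW SW]] := exists_triple hG.
have H3 : ele (Some 3) (omega_G gT).
  apply: ele_trans (W1 _ (ex_intro _ W (conj HW erefl))).
  by rewrite -SW; apply: lower_elt => //; rewrite SW.
have Hle : ele (Davenport gT) (omega_G gT).
  apply: D2 => x [U [HU ->]].
  case: (leqP 3 (size U)) => h.
    exact: ele_trans (lower_elt HU h) (W1 _ (ex_intro _ U (conj HU erefl))).
  apply: ele_trans H3; rewrite /=; exact: ltnW.
split => // Hab; apply: ele_anti => //.
apply: W2 => x [u [Hu ->]].
exact: ele_trans (upper_elt Hab Hu) (D1 _ (ex_intro _ u (conj Hu erefl))).
Qed.
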